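(* Let $\lambda<\eta$, $\theta_k,z_k\in\mathbb{R}^d$ with $z_k\ne0$ and $\|z_k-\nabla f(\theta_k)\|\le(1-\eta)\|z_k\|$. Let $\alpha_k\in\mathbb{R}$, $\theta_{k+1}=\theta_k-\alpha_kz_k$, $\epsilon_k,\epsilon_{k+1}\ge0$, and $\tilde{x}(\theta_k),\tilde{x}(\theta_{k+1})$ with $\|\tilde{x}(\theta_j)-\hat{x}(\theta_j)\|\le\epsilon_j$ ($j=k,k+1$). Let $w_k=\|\nabla g(\tilde{x}(\theta_k))\|+\|\nabla g(\tilde{x}(\theta_{k+1}))\|$, $\bar{\epsilon}_k=\max\{\epsilon_k,\epsilon_{k+1}\}$ and $$s_k=\frac{1}{2L_{\nabla g}}\Big(\sqrt{w_k^2+\tfrac{L_{\nabla g}}{L_{\nabla f}}(\eta-\lambda)^2\|z_k\|^2}-w_k\Big).$$ If $\bar{\epsilon}_k\in[0,s_k)$, then $$\hat{s}_k=\sqrt{(\eta-\lambda)^2-\frac{4L_{\nabla f}(w_k\bar{\epsilon}_k+L_{\nabla g}\bar{\epsilon}_k^2)}{\|z_k\|^2}}$$ is a positive real number, the numbers $\underline{\alpha}_k=\frac{1}{L_{\nabla f}}(\eta-\lambda-\hat{s}_k)$, $\overline{\alpha}_k=\frac{1}{L_{\nabla f}}(\eta-\lambda+\hat{s}_k)$ satisfy $0\le\underline{\alpha}_k<\overline{\alpha}_k$, and if $\alpha_k\in[\underline{\alpha}_k,\overline{\alpha}_k]$ then $\psi(\alpha_k)\le0$. Moreover, viewing $\hat{s}_k,\underline{\alpha}_k,\overline{\alpha}_k$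 as functions of $\bar{\epsilon}_k\in[0,s_k)$ with $w_k$ and $z_k$ fixed, $\hat{s}_k$ is monotonically decreasing in $\bar{\epsilon}_k$, $\lim_{\bar{\epsilon}_k\to0}\underline{\alpha}_k=0$ and $\lim_{\bar{\epsilon}_k\to0}\overline{\alpha}_k=\frac{2(\eta-\lambda)}{L_{\nabla f}}>0$.
   Context: Standing: $0<\eta<1$. $g:\mathbb{R}^n\to\mathbb{R}$ continuously differentiable with $L_{\nabla g}$-Lipschitz gradient, $L_{\nabla g}>0$; $\hat{x}(\theta)=\arg\min_xh(x,\theta)$ for a lower-level function $h$ strongly convex in $x$; $f(\theta)=g(\hat{x}(\theta))$ continuously differentiable with $L_{\nabla f}$-Lipschitz gradient, $L_{\nabla f}>0$. $\psi(\alpha_k)=\overline{U}(\tilde{x}(\theta_{k+1}),\epsilon_{k+1})-\underline{U}(\tilde{x}(\theta_k),\epsilon_k)+\lambda\alpha_k\|z_k\|^2$ with $\overline{U}(x,\epsilon)=g(x)+\|\nabla g(x)\|\epsilon+\frac{L_{\nabla g}}{2}\epsilon^2$, $\underline{U}(x,\epsilon)=g(x)-\|\nabla g(x)\|\epsilon-\frac{L_{\nabla g}}{2}\epsilon^2$. *)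

(* Defs.v *)
From HB Require Import structures.
From mathcomp Require Import all_boot all_order all_algebra.
From mathcomp Require Import all_classical all_reals all_analysis.
Set Implicit Arguments. Unset Strict Implicit. Unset Printing Implicit Defensive.
Import Order.TTheory GRing.Theory Num.Theory.
Import numFieldNormedType.Exports.
Local Open Scope ring_scope.

Definition dotv {R : realType} {n : nat} (u v : 'rV[R]_n) : R :=
  \sum_(i < n) u 0 i * v 0 i.
Definition enorm {R : realType} {n : nat} (u : 'rV[R]_n) : R :=
  Num.sqrt (dotv u u).

Definition grad {R : realType} {n : nat} (g : 'rV[R]_n -> R) (x : 'rV[R]_n)
  : 'rV[R]_n := \row_(i < n) ('d g x (delta_mx 0 i : 'rV[R]_n)).

Definition C1_Lipschitz_grad {R : realType} {n : nat} (g : 'rV[R]_n -> R)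
  (L : R) : Prop :=
  (forall x, differentiable g x) /\ continuous (grad g) /\
  (forall x y, enorm (grad g x - grad g y) <= L * enorm (x - y)).

Definition strongly_convex {R : realType} {n : nat} (mu : R)
  (phi : 'rV[R]_n -> R) : Prop :=
  forall (x y : 'rV[R]_n) (t : R), 0 <= t <= 1 ->
    phi (t *: x + (1 - t) *: y)
      <= t * phi x + (1 - t) * phi y - mu / 2 * t * (1 - t) * enorm (x - y) ^+ 2.

Definition Ubar {R : realType} {n : nat} (g : 'rV[R]_n -> R) (Lg : R)
  (x : 'rV[R]_n) (e : R) : R :=
  g x + enorm (grad g x) * e + Lg / 2 * e ^+ 2.
Definition Ulow {R : realType} {n : nat} (g : 'rV[R]_n -> R) (Lg : R)
  (x : 'rV[R]_n) (e : R) : R :=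
  g x - enorm (grad g x) * e - Lg / 2 * e ^+ 2.

Definition psi {R : realType} {n d : nat} (g : 'rV[R]_n -> R) (Lg lam : R)
  (xt : 'rV[R]_d -> 'rV[R]_n) (thk thk1 : 'rV[R]_d) (ek ek1 : R)
  (z : 'rV[R]_d) (alpha : R) : R :=
  Ubar g Lg (xt thk1) ek1 - Ulow g Lg (xt thk) ek + lam * alpha * enorm z ^+ 2.

(* Main.v *)
Require Import Defs.
From HB Require Import structures.
From mathcomp Require Import all_boot all_order all_algebra.
From mathcomp Require Import all_classical all_reals all_analysis.
From mathcomp Require Import ring lra.
Import Order.TTheory GRing.Theory Num.Theory.
Import numFieldNormedType.Exports.
Local Open Scope classical_set_scope.
Local Open Scope ring_scope.

Section Dot.
Variables (R : realType) (n : nat).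
Implicit Types (u v w : 'rV[R]_n).

Lemma dotvC u v : dotv u v = dotv v u.
Proof. by apply: eq_bigr => i _; rewrite mulrC. Qed.
Lemma dotvDl u v w : dotv (u + v) w = dotv u w + dotv v w.
Proof. by rewrite /dotv -big_split; apply: eq_bigr => i _; rewrite mxE mulrDl. Qed.
Lemma dotvZl a u v : dotv (a *: u) v = a * dotv u v.
Proof. by rewrite /dotv mulr_sumr; apply: eq_bigr => i _; rewrite mxE mulrA. Qed.
Lemma dotvNl u v : dotv (- u) v = - dotv u v.
Proof. by rewrite -scaleN1r dotvZl mulN1r. Qed.
Lemma dotvBl u v w : dotv (u - v) w = dotv u w - dotv v w.
Proof. by rewrite dotvDl dotvNl. Qed.
Lemma dotvBr u v w : dotv w (u - v) = dotv w u - dotv w v.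
Proof. by rewrite !(dotvC w) dotvBl. Qed.
Lemma dotvZr a u v : dotv v (a *: u) = a * dotv v u.
Proof. by rewrite !(dotvC v) dotvZl. Qed.
Lemma dotv_ge0 u : 0 <= dotv u u.
Proof. by apply: sumr_ge0 => i _; rewrite -expr2 sqr_ge0. Qed.
Lemma enorm_ge0 u : 0 <= enorm u.
Proof. exact: sqrtr_ge0. Qed.
Lemma enorm_sq u : enorm u ^+ 2 = dotv u u.
Proof. exact: sqr_sqrtr (dotv_ge0 u). Qed.
Lemma enormZ a u : enorm (a *: u) = `|a| * enorm u.
Proof.
rewrite /enorm dotvZl dotvC dotvZl mulrA -expr2 sqrtrM ?sqr_ge0 //.
by rewrite sqrtr_sqr.
Qed.
Lemma enormN u : enorm (- u) = enorm u.
Proof. by rewrite -scaleN1r enormZ normrN1 mul1r. Qed.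
Lemma enorm_eq0 u : enorm u = 0 -> u = 0.
Proof.
move=> /eqP; rewrite sqrtr_eq0 => H.
have H0 : dotv u u = 0 by apply/eqP; rewrite eq_le H dotv_ge0.
have H1 : forall i : 'I_n, true -> u 0 i * u 0 i = 0.
  by apply: psumr_eq0P => // i _; rewrite -expr2 sqr_ge0.
apply/matrixP => i j; rewrite (ord1 i) mxE.
have /eqP := H1 j isT; rewrite mulf_eq0 orbb => /eqP //.
Qed.

Lemma CS u v : dotv u v <= enorm u * enorm v.
Proof.
have [a0|a0] := eqVneq (enorm u) 0.
  by rewrite a0 mul0r (@enorm_eq0 u a0) /dotv big1 // => i _; rewrite mxE mul0r.
have [b0|b0] := eqVneq (enorm v) 0.
  by rewrite b0 mulr0 (@enorm_eq0 v b0) /dotv big1 // => i _; rewrite mxE mulr0.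
have ha : 0 < enorm u by rewrite lt_def a0 enorm_ge0.
have hb : 0 < enorm v by rewrite lt_def b0 enorm_ge0.
have := dotv_ge0 (enorm v *: u - enorm u *: v).
rewrite !dotvBl !dotvBr !dotvZl !dotvZr.
rewrite -!enorm_sq (dotvC v u) => H.
have : 0 <= 2 * (enorm u * enorm v) * (enorm u * enorm v - dotv u v).
  move: H; set a := enorm u; set b := enorm v; set c := dotv u v.
  move=> H; suff -> : 2 * (a * b) * (a * b - c) =
    b * (b * a ^+ 2) - b * (a * c) - (a * (b * c) - a * (a * b ^+ 2)) by [].
  ring.
by rewrite pmulr_rge0 ?subr_ge0 // mulr_gt0 // mulr_gt0.
Qed.
End Dot.

Lemma CS_abs (R : realType) (n : nat) (u v : 'rV[R]_n) : `|dotv u v| <= enorm u * enorm v.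
Proof.
rewrite ler_norml CS andbT lerNl -dotvNl -(@enormN R n u); exact: CS.
Qed.

Section Desc.
Variables (R : realType) (n : nat).

Lemma dgrad (g : 'rV[R]_n -> R) x v : 'd g x v = dotv (grad g x) v.
Proof.
rewrite {1}(matrix_sum_delta v) big_ord1 linear_sum /dotv; apply: eq_bigr => i _.
by rewrite linearZ /= mxE mulrC.
Qed.

Lemma line_derive (g : 'rV[R]_n -> R) x v t :
  differentiable g (x + t *: v) ->
  is_derive t (1:R) (fun s : R => g (x + s *: v)) (dotv (grad g (x + t *: v)) v).
Proof.
move=> dg.
set y := x + t *: v.
have E : (fun h : R => h^-1 *: (((fun s : R => g (x + s *: v)) \o shift t) (h *: 1) - g (x + t *: v)))
   = (fun h : R => h^-1 *: ((g \o shift y) (h *: v) - g y)).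
  apply/funext => h /=; congr (_ *: (g _ - _)).
  by rewrite /y [_%:A]mulr1 scalerDl addrCA.
split.
  by rewrite /derivable E; apply: diff_derivable.
by rewrite /derive E -/(derive g y v) deriveE // dgrad.
Qed.
End Desc.

Lemma descent (R : realType) (n : nat) (g : 'rV[R]_n -> R) L x v :
  C1_Lipschitz_grad g L ->
  `|g (x + v) - g x - dotv (grad g x) v| <= L / 2 * enorm v ^+ 2.
Proof.
move=> [dg [_ Lip]].
set c := dotv (grad g x) v; set K := L / 2 * enorm v ^+ 2.
pose phi := fun s : R => g (x + s *: v).
have Dphi : forall s, is_derive s (1:R) phi (dotv (grad g (x + s *: v)) v).
  by move=> s; apply: line_derive.
suff main : forall sg : R, `|sg| <= 1 -> sg * (g (x + v) - g x - c) <= K.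
  rewrite ler_norml; apply/andP; split.
    by rewrite lerNl -mulN1r; apply: main; rewrite normrN1.
  by rewrite -[X in X <= _]mul1r; apply: main; rewrite normr1.
move=> sg hsg.
pose psi := (sg \*: ((phi - cst (phi 0)) - c \*: (@id R))) - K \*: ((@id R) * (@id R)).
have Dpsi : forall s, is_derive s (1:R) psi
   (sg *: ((dotv (grad g (x + s *: v)) v - 0) - c *: 1) - K *: (s *: 1 + s *: 1)).
  move=> s; exact: is_deriveB.
have Hmono := @ler0_derive1_nincr R psi 0 1.
have H10 : psi 1 <= psi 0.
  apply: Hmono => //.
  - move=> s; rewrite in_itv /= => /andP [s0 s1].
    rewrite derive1E derive_val.
    rewrite ![_%:A]mulr1 subr0 /c -dotvBl.
    set d := dotv _ v.
    have h1 : sg * d <= `|d|.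
      have H1 := @ler_norm R (sg * d); rewrite normrM in H1.
      have H2 : `|sg| * `|d| <= `|d| by rewrite -[X in _ <= X]mul1r ler_wpM2r.
      lra.
    have h2 : `|d| <= L * (s * enorm v) * enorm v.
      have H3 := @CS_abs _ _ (grad g (x + s *: v) - grad g x) v.
      have H4 := Lip (x + s *: v) x.
      rewrite (_ : x + s *: v - x = s *: v) in H4; last by rewrite addrC addKr.
      rewrite enormZ gtr0_norm // in H4.
      have H5 := @enorm_ge0 _ _ v.
      have H6 : enorm (grad g (x + s *: v) - grad g x) * enorm v <= L * (s * enorm v) * enorm v.
        by rewrite ler_wpM2r.
      rewrite /d; lra.
    change (sg * d - K * (s + s) <= 0); rewrite /K expr2; lra.
  - apply: derivable_within_continuous => s _; have [] := Dpsi s; done.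
have psiE : forall s, psi s = sg * (phi s - phi 0 - c * s) - K * (s * s) by [].
move: H10; rewrite !psiE /phi !scale1r !scale0r !addr0 subrr mul0r mulr0 subr0 mulr0.
by rewrite !mulr1 subrr mulr0 subr_le0.
Qed.

Lemma arith_HD (R : realFieldType) (Z2 D A Z eta : R) :
  Z2 - D <= A -> A <= (1 - eta) * Z * Z -> Z2 = Z * Z -> eta * Z2 <= D.
Proof. move=> h1 h2 E; rewrite E in h1 *; lra. Qed.

Lemma arith_mono (R : realFieldType) (a b c d : R) :
  a <= b -> c < d -> a + c < b + d.
Proof. lra. Qed.

Lemma arith_final (R : realFieldType)
  (gx1 gh1 gx0 gh0 G0 G1 E0 E1 dt1 dt0 ek ek1 eb Lg Lf lam eta a Z D : R) :
  - (Lg / 2 * E1 ^+ 2) <= gh1 - gx1 - dt1 ->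
  - (G1 * E1) <= dt1 ->
  G1 * E1 <= G1 * ek1 ->
  Lg / 2 * E1 ^+ 2 <= Lg / 2 * ek1 ^+ 2 ->
  gh0 - gx0 - dt0 <= Lg / 2 * E0 ^+ 2 ->
  dt0 <= G0 * E0 ->
  G0 * E0 <= G0 * ek ->
  Lg / 2 * E0 ^+ 2 <= Lg / 2 * ek ^+ 2 ->
  gh1 - gh0 - - a * D <= Lf / 2 * (a * Z) ^+ 2 ->
  a * (eta * Z ^+ 2) <= a * D ->
  G0 * ek <= G0 * eb ->
  G1 * ek1 <= G1 * eb ->
  Lg * ek ^+ 2 <= Lg * eb ^+ 2 ->
  Lg * ek1 ^+ 2 <= Lg * eb ^+ 2 ->
  Z ^+ 2 * (Lf / 2 * a ^+ 2 - (eta - lam) * a) + 2 * ((G0 + G1) * eb + Lg * eb ^+ 2) <= 0 ->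
  gx1 + G1 * ek1 + Lg / 2 * ek1 ^+ 2 - (gx0 - G0 * ek - Lg / 2 * ek ^+ 2)
    + lam * a * Z ^+ 2 <= 0.
Proof.
move=> h1 h2 h3 h4 h5 h6 h7 h8 h9 h10 h11 h12 h13 h14 h15.
rewrite !expr2 in h1 h4 h5 h8 h9 h10 h13 h14 h15 *.
lra.
Qed.

Theorem lemma3p8 (R : realType) (n d : nat)
  (eta lam Lg Lf : R)
  (g : 'rV[R]_n -> R) (h : 'rV[R]_n -> 'rV[R]_d -> R)
  (xhat : 'rV[R]_d -> 'rV[R]_n)
  (xt : 'rV[R]_d -> 'rV[R]_n)
  (thk thk1 z : 'rV[R]_d) (alpha ek ek1 : R) :
  0 < eta < 1 ->
  0 < Lg -> C1_Lipschitz_grad g Lg ->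
  (forall th, exists2 mu : R, 0 < mu & strongly_convex mu (fun x => h x th)) ->
  (forall th x, h (xhat th) th <= h x th) ->
  0 < Lf -> C1_Lipschitz_grad (fun th => g (xhat th)) Lf ->
  lam < eta ->
  z != 0 ->
  enorm (z - grad (fun th => g (xhat th)) thk) <= (1 - eta) * enorm z ->
  thk1 = thk - alpha *: z ->
  0 <= ek -> 0 <= ek1 ->
  enorm (xt thk - xhat thk) <= ek ->
  enorm (xt thk1 - xhat thk1) <= ek1 ->
  let w := enorm (grad g (xt thk)) + enorm (grad g (xt thk1)) in
  let ebar := Num.max ek ek1 in
  let s := (Lg *+ 2)^-1 *
      (Num.sqrt (w ^+ 2 + Lg / Lf * (eta - lam) ^+ 2 * enorm z ^+ 2) - w) in
  let rad := fun e : R =>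
      (eta - lam) ^+ 2 - 4 * Lf * (w * e + Lg * e ^+ 2) / enorm z ^+ 2 in
  let shat := fun e : R => Num.sqrt (rad e) in
  let alo := fun e : R => Lf^-1 * (eta - lam - shat e) in
  let ahi := fun e : R => Lf^-1 * (eta - lam + shat e) in
  0 <= ebar < s ->
  [/\ 0 < rad ebar /\ 0 < shat ebar,
      0 <= alo ebar /\ alo ebar < ahi ebar,
      (alo ebar <= alpha <= ahi ebar ->
         psi g Lg lam xt thk thk1 ek ek1 z alpha <= 0),
      (forall e1 e2 : R, 0 <= e1 -> e1 < e2 -> e2 < s -> shat e2 < shat e1)
    & [/\ alo e @[e --> 0^'+] --> 0,
           ahi e @[e --> 0^'+] --> 2 * (eta - lam) / Lf
         & 0 < 2 * (eta - lam) / Lf]].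
Proof.
move=> /andP[eta0 eta1] Lg0 Cg _ _ Lf0 Cf lam_eta z0 Hz Hth ek0 ek10 Hxk Hxk1.
move=> w ebar s rad shat alo ahi /andP[eb0 ebs].
have el0 : 0 < eta - lam by rewrite subr_gt0.
have Z0 : 0 < enorm z.
  rewrite lt_def enorm_ge0 andbT; apply: contra_neq z0; exact: enorm_eq0.
have w0 : 0 <= w by rewrite addr_ge0 // enorm_ge0.
have Q0 : 0 <= w ^+ 2 + Lg / Lf * (eta - lam) ^+ 2 * enorm z ^+ 2.
  by rewrite addr_ge0 ?sqr_ge0 // !mulr_ge0 ?sqr_ge0 ?invr_ge0 // ltW.
have radpos : forall e, 0 <= e -> e < s -> 0 < rad e.
  move=> e e0 es.
  pose SQ := Num.sqrt (w ^+ 2 + Lg / Lf * (eta - lam) ^+ 2 * enorm z ^+ 2).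
  have es' : e < (Lg *+ 2)^-1 * (SQ - w) := es.
  have L2 : 0 < Lg *+ 2 by rewrite mulrn_wgt0.
  have h1 : Lg *+ 2 * e + w < SQ.
    move: es'; rewrite -(ltr_pM2l L2) mulrA mulfV ?mul1r ?gt_eqF //.
    by move=> hh; lra.
  have h2 : (Lg *+ 2 * e + w) ^+ 2 < SQ ^+ 2.
    have ha : 0 <= Lg *+ 2 * e + w by rewrite addr_ge0 // mulr_ge0 // ltW.
    rewrite ltr_pXn2r // ?nnegrE //; exact: le_trans ha (ltW h1).
  rewrite /SQ sqr_sqrtr // in h2.
  have E : rad e = Lf * ((w ^+ 2 + Lg / Lf * (eta - lam) ^+ 2 * enorm z ^+ 2)
                        - (Lg *+ 2 * e + w) ^+ 2) / (Lg * enorm z ^+ 2).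
    rewrite /rad mulr2n; field.
    by rewrite !gt_eqF.
  rewrite E divr_gt0 ?mulr_gt0 ?exprn_gt0 // subr_gt0; exact: h2.
have radle : forall e, 0 <= e -> rad e <= (eta - lam) ^+ 2.
  move=> e e0; rewrite /rad.
  have : 0 <= 4 * Lf * (w * e + Lg * e ^+ 2) / enorm z ^+ 2.
    apply: mulr_ge0; last by rewrite invr_ge0 sqr_ge0.
    apply: mulr_ge0; first by rewrite mulr_ge0 // ltW.
    apply: addr_ge0; first exact: mulr_ge0.
    by apply: mulr_ge0; [exact: ltW | exact: sqr_ge0].
  lra.
have shatpos : forall e, 0 <= e -> e < s -> 0 < shat e.
  by move=> e e0 es; rewrite /shat sqrtr_gt0; exact: radpos.
have shatle : forall e, 0 <= e -> shat e <= eta - lam.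
  move=> e e0; have -> : eta - lam = Num.sqrt ((eta - lam) ^+ 2).
    by rewrite sqrtr_sqr ger0_norm // ltW.
  by rewrite /shat ler_sqrt ?sqr_ge0 // radle.
have alo_ge0 : 0 <= alo ebar.
  apply: mulr_ge0; first by rewrite invr_ge0 ltW.
  by rewrite subr_ge0; exact: shatle.
have sp := shatpos _ eb0 ebs.
have rad0 : rad 0 = (eta - lam) ^+ 2.
  rewrite /rad (_ : w * 0 + Lg * 0 ^+ 2 = 0); last by rewrite expr2 !mulr0 addr0.
  by rewrite mulr0 mul0r subr0.
have shat0 : shat 0 = eta - lam.
  by rewrite /shat rad0 sqrtr_sqr ger0_norm // ltW.
split.
- by split => //; exact: radpos.
- split => //; rewrite /alo /ahi ltr_pM2l ?invr_gt0 //; lra.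
- move=> /andP[ha1 ha2].
  have a0 : 0 <= alpha := le_trans alo_ge0 ha1.
  pose G0 := enorm (grad g (xt thk)).
  pose G1 := enorm (grad g (xt thk1)).
  have G00 : 0 <= G0 by exact: enorm_ge0.
  have G10 : 0 <= G1 by exact: enorm_ge0.
  have D1 := @descent _ _ g Lg (xt thk1) (xhat thk1 - xt thk1) Cg.
  rewrite (_ : xt thk1 + (xhat thk1 - xt thk1) = xhat thk1) in D1;
    last by rewrite addrC subrK.
  have N1 : enorm (xhat thk1 - xt thk1) <= ek1 by rewrite -enormN opprB.
  have C1 := @CS_abs _ _ (grad g (xt thk1)) (xhat thk1 - xt thk1).
  have P1 : G1 * enorm (xhat thk1 - xt thk1) <= G1 * ek1 by exact: (ler_wpM2l G10 N1).
  have S1 : Lg / 2 * enorm (xhat thk1 - xt thk1) ^+ 2 <= Lg / 2 * ek1 ^+ 2.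
    apply: ler_wpM2l; first by rewrite divr_ge0 // ltW.
    rewrite !expr2; apply: ler_pM => //; exact: enorm_ge0.
  move: D1; rewrite ler_norml => /andP[D1a D1b].
  move: C1; rewrite ler_norml => /andP[C1a C1b].
  have D0 := @descent _ _ g Lg (xt thk) (xhat thk - xt thk) Cg.
  rewrite (_ : xt thk + (xhat thk - xt thk) = xhat thk) in D0;
    last by rewrite addrC subrK.
  have N0 : enorm (xhat thk - xt thk) <= ek by rewrite -enormN opprB.
  have C0 := @CS_abs _ _ (grad g (xt thk)) (xhat thk - xt thk).
  have P0 : G0 * enorm (xhat thk - xt thk) <= G0 * ek.
    apply: ler_wpM2l. exact: G00. exact: N0.
  have S0 : Lg / 2 * enorm (xhat thk - xt thk) ^+ 2 <= Lg / 2 * ek ^+ 2.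
    apply: ler_wpM2l; first by rewrite divr_ge0 // ltW.
    rewrite !expr2; apply: ler_pM => //; exact: enorm_ge0.
  move: D0; rewrite ler_norml => /andP[D0a D0b].
  move: C0; rewrite ler_norml => /andP[C0a C0b].
  have Df := @descent _ _ (fun th => g (xhat th)) Lf thk (thk1 - thk) Cf.
  rewrite (_ : thk + (thk1 - thk) = thk1) in Df; last by rewrite addrC subrK.
  have E : thk1 - thk = (- alpha) *: z by rewrite Hth addrAC subrr add0r scaleNr.
  rewrite E dotvZr enormZ normrN (ger0_norm a0) in Df.
  move: Df; rewrite ler_norml => /andP[Dfa Dfb].
  set D := dotv (grad (fun th => g (xhat th)) thk) z in Dfa Dfb.
  have HD : eta * enorm z ^+ 2 <= D.
    have := @CS _ _ (z - grad (fun th => g (xhat th)) thk) z.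
    rewrite dotvBl -enorm_sq -/D => hh.
    have hh2 : enorm (z - grad (fun th => g (xhat th)) thk) * enorm z
            <= (1 - eta) * enorm z * enorm z.
      by apply: ler_wpM2r => //; exact: ltW.
    by apply: (@arith_HD R _ _ _ (enorm z)) hh hh2 _; rewrite expr2.
  have HaD : alpha * (eta * enorm z ^+ 2) <= alpha * D by exact: (ler_wpM2l a0 HD).
  have e1 : ek <= ebar by rewrite le_max lexx.
  have e2 : ek1 <= ebar by rewrite le_max lexx orbT.
  have B0 : G0 * ek <= G0 * ebar by exact: (ler_wpM2l G00 e1).
  have B1 : G1 * ek1 <= G1 * ebar by exact: (ler_wpM2l G10 e2).
  have B2 : Lg * ek ^+ 2 <= Lg * ebar ^+ 2.
    apply: ler_wpM2l; first exact: ltW.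
    rewrite !expr2; exact: (ler_pM ek0 ek0 e1 e1).
  have B3 : Lg * ek1 ^+ 2 <= Lg * ebar ^+ 2.
    apply: ler_wpM2l; first exact: ltW.
    rewrite !expr2; exact: (ler_pM ek10 ek10 e2 e2).
  have QA : Lf * enorm z ^+ 2 / 2 * ((alpha - alo ebar) * (alpha - ahi ebar)) =
      enorm z ^+ 2 * (Lf / 2 * alpha ^+ 2 - (eta - lam) * alpha)
      + 2 * (w * ebar + Lg * ebar ^+ 2).
    have S2 : shat ebar ^+ 2 = rad ebar by rewrite sqr_sqrtr // (ltW (radpos _ eb0 ebs)).
    apply/eqP; rewrite -subr_eq0; apply/eqP.
    have -> : Lf * enorm z ^+ 2 / 2 * ((alpha - alo ebar) * (alpha - ahi ebar)) -
      (enorm z ^+ 2 * (Lf / 2 * alpha ^+ 2 - (eta - lam) * alpha)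
      + 2 * (w * ebar + Lg * ebar ^+ 2)) =
      enorm z ^+ 2 / (2 * Lf) * (rad ebar - shat ebar ^+ 2).
      rewrite /alo /ahi /rad; move: (shat ebar) (Num.max ek ek1) => S eb; field.
      by rewrite !gt_eqF.
    by rewrite S2 subrr mulr0.
  have QN : (alpha - alo ebar) * (alpha - ahi ebar) <= 0.
    by rewrite mulr_ge0_le0 // ?subr_ge0 ?subr_le0.
  have QL : Lf * enorm z ^+ 2 / 2 * ((alpha - alo ebar) * (alpha - ahi ebar)) <= 0.
    by rewrite mulr_ge0_le0 // !mulr_ge0 ?invr_ge0 ?sqr_ge0 // ltW.
  rewrite QA in QL.
  rewrite /psi /Ubar /Ulow.
  rewrite /w in QL.
  apply: (@arith_final R _ _ _ _ _ _ _ _ _ _ _ _ _ _ _ _ _ _ _ _ D1a C1a P1 S1 D0b C0b P0 S0 Dfb HaD B0 B1 B2 B3 QL).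
- move=> e1 e2 e10 e12 e2s.
  have e1s : e1 < s by exact: lt_trans e12 e2s.
  rewrite /shat ltr_sqrt; last exact: radpos.
  rewrite /rad ltrD2l ltrN2 ltr_pM2r ?invr_gt0 ?exprn_gt0 // ltr_pM2l ?mulr_gt0 //.
  have m1 : w * e1 <= w * e2 by apply: ler_wpM2l => //; exact: ltW.
  have m2 : e1 ^+ 2 < e2 ^+ 2.
    rewrite !expr2; exact: (ltr_pM e10 e10 e12 e12).
  have m3 : Lg * e1 ^+ 2 < Lg * e2 ^+ 2 by rewrite (ltr_pM2l Lg0); exact: m2.
  exact: (@arith_mono R _ _ _ _ m1 m3).
- split.
  + suff H : alo e @[e --> 0^'+] --> alo 0.
      by move: H; rewrite /alo shat0 subrr mulr0.
    apply: cvg_at_right_filter; rewrite /alo /shat /rad.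
    apply: cvgM; first exact: cvg_cst.
    apply: cvgB; first exact: cvg_cst.
    apply: continuous_cvg; first exact: sqrt_continuous.
    apply: cvgB; first exact: cvg_cst.
    apply: cvgM; last exact: cvg_cst.
    apply: cvgM; first exact: cvg_cst.
    apply: cvgD; apply: cvgM; try exact: cvg_cst.
    * exact: cvg_id.
    * rewrite expr2; apply: cvgM; exact: cvg_id.
  + suff H : ahi e @[e --> 0^'+] --> ahi 0.
      by move: H; rewrite /ahi shat0 mulrC -mulr2n mulr_natl.
    apply: cvg_at_right_filter; rewrite /ahi /shat /rad.
    apply: cvgM; first exact: cvg_cst.
    apply: cvgD; first exact: cvg_cst.
    apply: continuous_cvg; first exact: sqrt_continuous.
    apply: cvgB; first exact: cvg_cst.
    apply: cvgM; last exact: cvg_cst.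
    apply: cvgM; first exact: cvg_cst.
    apply: cvgD; apply: cvgM; try exact: cvg_cst.
    * exact: cvg_id.
    * rewrite expr2; apply: cvgM; exact: cvg_id.
  + by rewrite divr_gt0 // mulr_gt0.
Qed.
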